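(* If $G$ is a planar ribbon graph, then the action $\beta_v$ of $\operatorname{Pic}^0(G)$ on $S(G)$ is independent of the vertex $v$, and hence defines a canonical action $\beta$ of $\operatorname{Pic}^0(G)$ on $S(G)$.
   Context: A graph means a finite connected multigraph without loop edges; a ribbon graph is a graph with a cyclic ordering of the edges around each vertex. A ribbon graph is planar if it can be embedded in $\mathbb{R}^2$ without crossings so that the cyclic orderings are those induced by the counterclockwise orientation of the plane (equivalently, the closed orientable surface determined by the ribbon structure has genus $0$). $S(G)$ is the set of spanning trees. Divisors are formal integer combinations of vertices. For $f : V(G) \to \mathbb{Z}$, $\Delta f = \sum_{u} \big(\sum_{\text{edges } uw} (f(u)-f(w))\big)(u)$; $D \sim D'$ if $D - D' = \Delta f$ for some $f$. $\operatorname{Pic}^d(G)$ is the set of linear equivalence classes of degree-$d$ divisors; $\operatorname{Pic}^0(G)$ is a group. The genus is $g = |E(G)|-|V(G)|+1$. For a spanning tree $T$ with non-tree edges $e_1,\dots,e_g$, a $T$-break divisor is $\sum_i (v_i)$ with $v_i$ an endpoint of $e_i$; $B(G)$ is the set of all such (over all $T$). Every class in $\operatorname{Pic}^g(G)$ contains exactly one element of $B(G)$, and $\operatorname{Pic}^0(G)$ acts on $B(G)$ by $\gamma \cdot D :=$ the unique break divisor linearly equivalent to $D + \gamma$. Bernardi map: for a vertex $v$, an edge $e$ incident to $v$, and a spanning tree $T$, the tour starts at $v$ and examines edges at $v$ in cyclic order starting with $e$; at a current vertex $u$, an examined edge $f \notin T$ is ''cut through'' from $u$ and the next edge at $u$ is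 examined, while an examined edge $f \in T$ is walked along to its other endpoint $u'$, after which the edges at $u'$ are examined in cyclic order starting with the edge after $f$. The tour ends when each tree edge has been traversed in both directions. For $f \notin T$, $\eta_{(v,e)}(f)$ is the endpoint from which $f$ is first cut through, and $\beta_{(v,e)}(T) = \sum_{f \notin T} (\eta_{(v,e)}(f))$; $\beta_{(v,e)} : S(G) \to B(G)$ is a bijection. The action $\beta_v$ is $\gamma \cdot T := \beta_{(v,e)}^{-1}(\gamma \cdot \beta_{(v,e)}(T))$ for any edge $e$ incident to $v$ (independent of $e$). *)

(* Defs.v *)
From mathcomp Require Import all_boot all_order all_algebra all_fingroup.
Set Implicit Arguments. Unset Strict Implicit. Unset Printing Implicit Defensive.
Import GRing.Theory Num.Theory.

Local Open Scope ring_scope.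
Section RibbonGraphs.
Variables (V E : finType) (ends : E -> V * V).

(** A multigraph: vertex set V, edge set E, each edge e joins ends e = (a, b).
    Darts (half-edges): (e, true) sits at (ends e).1, (e, false) at (ends e).2. *)
Definition dart := (E * bool)%type.
Definition tail (d : dart) : V := if d.2 then (ends d.1).1 else (ends d.1).2.
Definition alpha (d : dart) : dart := (d.1, ~~ d.2).

Definition loopless : Prop := forall e : E, (ends e).1 != (ends e).2.

Definition incident (v : V) (e : E) : bool := ((ends e).1 == v) || ((ends e).2 == v).

Definition adj (S : {set E}) : rel V :=
  fun u w => [exists e in S, (ends e == (u, w)) || (ends e == (w, u))].

Definition connected_graph : Prop := forall u w : V, connect (adj [set: E]) u w.

Definition spanning_tree (T : {set E}) : Prop :=
  (forall u w : V, connect (adj T) u w) /\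
  (forall e, e \in T -> ~~ connect (adj (T :\ e)) (ends e).1 (ends e).2).

(** ribbon structure: sigma d is the next dart (counterclockwise) around tail d,
    and the darts at each vertex form a single sigma-cycle. *)
Definition ribbon (sigma : {perm dart}) : Prop :=
  (forall d, tail (sigma d) = tail d) /\
  (forall d d', tail d = tail d' -> fconnect sigma d d').

(** faces are the orbits of sigma o alpha; planar = genus 0, i.e.
    V - E + F = 2 (Euler characteristic of the associated closed surface). *)
Definition nfaces (sigma : {perm dart}) : nat := fcard (fun d => sigma (alpha d)) predT.
Definition planar (sigma : {perm dart}) : Prop :=
  (#|V| + nfaces sigma = #|E| + 2)%N.

Definition divisor := V -> int.
Definition deg (D : divisor) : int := \sum_(u : V) D u.
Definition laplacian (f : V -> int) : divisor := fun u =>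
  \sum_(e : E) (if (ends e).1 == u then f u - f (ends e).2
                else if (ends e).2 == u then f u - f (ends e).1 else 0).
Definition lin_equiv (D D' : divisor) : Prop :=
  exists f : V -> int, forall u, D u - D' u = laplacian f u.
Definition add_div (D D' : divisor) : divisor := fun u => D u + D' u.

Variable sigma : {perm dart}.
Definition start_dart (v : V) (e : E) : dart := (e, (ends e).1 == v).
(* non-tree dart: cut through, examine next edge at the same vertex;
   tree dart: walk to the other end, examine the edge after it there. *)
Definition tour_step (T : {set E}) (d : dart) : dart :=
  if d.1 \in T then sigma (alpha d) else sigma d.
Definition tour (T : {set E}) (v : V) (e : E) : seq dart :=
  traject (tour_step T) (start_dart v e) #|{: dart}|.
(** eta(f): endpoint from which f is first cut through *)
Definition eta (T : {set E}) (v : V) (e : E) (f : E) : V :=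
  let s := tour T v e in tail (nth (start_dart v e) s (find (fun d : dart => d.1 == f) s)).
Definition bernardi (T : {set E}) (v : V) (e : E) : divisor := fun u =>
  (#|[set f | (f \notin T) && (eta T v e f == u)]|)%:Z.

(** the action beta_v: [beta_act v e gamma T T1] means  gamma . T = T1, i.e.
    beta_(v,e)(T1) is the break divisor linearly equivalent to beta_(v,e)(T) + gamma *)
Definition beta_act (v : V) (e : E) (gamma : divisor) (T T1 : {set E}) : Prop :=
  lin_equiv (bernardi T1 v e) (add_div (bernardi T v e) gamma).

End RibbonGraphs.

(* Main.v *)
Require Import Defs.
From mathcomp Require Import all_boot all_order all_algebra all_fingroup.
From mathcomp Require Import zify ring.
Set Implicit Arguments. Unset Strict Implicit. Unset Printing Implicit Defensive.
Import GRing.Theory Num.Theory.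

Module P1.

Lemma porbit_fconnect (T : finType) (p : {perm T}) x y :
  (y \in porbit p x) = fconnect p x y.
Proof.
apply/porbitP/idP => [[i ->] | H]; first by rewrite permX; apply: fconnect_iter.
by exists (findex p x y); rewrite permX iter_findex.
Qed.

Lemma fsym (T : finType) (p : {perm T}) : connect_sym (frel p).
Proof. move=> x y; apply: fconnect_sym; exact: perm_inj. Qed.

Lemma card_porbits_fcard (T : finType) (p : {perm T}) :
  #|porbits p| = fcard p predT.
Proof.
have E1 : porbits p = porbit p @: [set x | froots p x].
  apply/setP => P; apply/imsetP/imsetP => [[x _ ->] | [x _ ->]]; last by exists x.
  exists (froot p x); first by rewrite inE; apply: roots_root; apply: fsym.
  apply/eqP; rewrite eq_porbit_mem porbit_fconnect fsym.
  exact: connect_root.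
rewrite E1 card_in_imset.
  by apply: eq_card => x; rewrite !inE andbT.
move=> x y; rewrite !inE => rx ry /eqP; rewrite eq_porbit_mem porbit_fconnect => H.
rewrite -(eqP rx) -(eqP ry); apply/fingraph.rootP; first exact: fsym.
by rewrite fsym.
Qed.

Lemma porbit_step (T : finType) (s : {perm T}) y z :
  z \in porbit s y -> s z \in porbit s y.
Proof.
rewrite !porbit_fconnect => H; apply: connect_trans H _; exact: fconnect1.
Qed.

Lemma porbit_iter (T : finType) (s : {perm T}) y z i :
  z \in porbit s y -> iter i s z \in porbit s y.
Proof. by move=> H; elim: i => //= i IH; apply: porbit_step. Qed.

Lemma porbit_same (T : finType) (s : {perm T}) y z w :
  z \in porbit s y -> (w \in porbit s z) = (w \in porbit s y).
Proof. by rewrite -eq_porbit_mem => /eqP ->. Qed.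

Section Single.
Variables (T : finType) (pi : {perm T}).
Hypothesis single : forall x y, y \in porbit pi x.
Local Notation N := #|T|.

Definition pos (s z : T) := index z (traject pi s N).

Lemma card_porbit_all x : #|porbit pi x| = N.
Proof.
have -> : porbit pi x = [set: T] by apply/setP => y; rewrite inE single.
exact: cardsT.
Qed.

Lemma mem_traj s z : z \in traject pi s N.
Proof. by rewrite -(card_porbit_all s) -porbit_traject. Qed.

Lemma uniq_traj s : uniq (traject pi s N).
Proof. by rewrite -(card_porbit_all s) uniq_traject_porbit. Qed.

Lemma pos_lt s z : pos s z < N.
Proof. by rewrite /pos -{2}(size_traject pi s N) index_mem mem_traj. Qed.

Lemma iter_pos s z : iter (pos s z) pi s = z.
Proof. by rewrite -(nth_traject _ (pos_lt s z)) nth_index ?mem_traj. Qed.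

Lemma pos_iter s i : i < N -> pos s (iter i pi s) = i.
Proof.
move=> Hi; rewrite /pos -(nth_traject _ Hi) index_uniq ?size_traject //.
exact: uniq_traj.
Qed.

Lemma iterN s : iter N pi s = s.
Proof. by rewrite -{1}(card_porbit_all s) iter_porbit. Qed.

Lemma pos_inj s z z' : pos s z = pos s z' -> z = z'.
Proof. by move=> H; rewrite -(iter_pos s z) H iter_pos. Qed.

Lemma pos_self s : pos s s = 0.
Proof.
have : 0 < N by apply/card_gt0P; exists s.
by rewrite /pos; case: #|T| => //= n _; rewrite eqxx.
Qed.

Lemma pos_shift s j z : j <= N ->
  pos (iter j pi s) z = if j <= pos s z then pos s z - j else pos s z + N - j.
Proof.
move=> HjN; have Hp := pos_lt s z; case: ifP => Hj.
  have E : z = iter (pos s z - j) pi (iter j pi s).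
    by rewrite -iterD subnK // iter_pos.
  rewrite {1}E pos_iter //; lia.
have E : z = iter (pos s z + N - j) pi (iter j pi s).
  rewrite -iterD.
  have -> : pos s z + N - j + j = pos s z + N by lia.
  by rewrite iterD iterN iter_pos.
rewrite {1}E pos_iter //; lia.
Qed.

Lemma pos_succ s z : pos s z < N.-1 -> pos s (pi z) = (pos s z).+1.
Proof.
move=> H; rewrite -{1}(iter_pos s z) -iterS pos_iter //; lia.
Qed.

Lemma pos_last s z : pos s z = N.-1 -> pi z = s.
Proof.
move=> H; rewrite -{1}(iter_pos s z) -iterS H.
have -> : N.-1.+1 = N by have := pos_lt s z; lia.
exact: iterN.
Qed.

Section Arc.
Variables (x y : T).
Hypothesis xy : x != y.
Local Notation pi2 := (tperm x y * pi)%g.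

Lemma pi2E z : pi2 z = pi (tperm x y z).
Proof. by rewrite permM. Qed.

Lemma arc_pos_y : 0 < pos x y.
Proof.
rewrite lt0n; apply/negP => /eqP H.
by move: xy; rewrite -(iter_pos x y) H eqxx.
Qed.

Lemma tperm_fix z : z != x -> z != y -> tperm x y z = z.
Proof. by move=> H1 H2; rewrite tpermD // eq_sym. Qed.

Lemma arc z : (z \in porbit pi2 y) = (0 < pos x z <= pos x y).
Proof.
have Hy := arc_pos_y; have Hly := pos_lt x y.
have Hx0 := pos_self x.
apply/idP/idP.
  move/porbitP => [i ->]; rewrite permX.
  elim: i => [|i IH] /=; first by rewrite Hy leqnn.
  move: IH; set w := iter i pi2 y => /andP [H1 H2].
  rewrite pi2E; case: (eqVneq w y) => [-> | Hwy].
    rewrite tpermR pos_succ ?Hx0 //; lia.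
  have Hwx : w != x by apply/negP => /eqP Hw; move: H1; rewrite Hw Hx0.
  have Hne : pos x w != pos x y.
    by apply/negP => /eqP /pos_inj Hw; rewrite Hw eqxx in Hwy.
  rewrite tperm_fix // pos_succ; lia.
move=> /andP [H1 H2]; rewrite -(iter_pos x z).
move: H1 H2; elim: (pos x z) => [//|i IH] _ Hi.
case: i IH Hi => [|i] IH Hi.
  have -> : iter 1 pi x = pi2 y by rewrite pi2E tpermR.
  apply: porbit_step; exact: porbit_id.
have Hw := IH isT (ltnW Hi).
have Hwp : pos x (iter i.+1 pi x) = i.+1 by rewrite pos_iter //; lia.
have Hwx : iter i.+1 pi x != x by apply/negP => /eqP Hw'; move: Hwp; rewrite Hw' Hx0.
have Hwy : iter i.+1 pi x != y by apply/negP => /eqP Hw'; move: Hwp; rewrite Hw'; lia.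
have -> : iter i.+2 pi x = pi2 (iter i.+1 pi x) by rewrite pi2E tperm_fix.
exact: porbit_step.
Qed.

Lemma arc_other z : (z \notin porbit pi2 y) -> z \in porbit pi2 x.
Proof.
rewrite arc => Hz.
have Hy := arc_pos_y; have Hly := pos_lt x y; have Hx0 := pos_self x.
case: (eqVneq z x) => [-> | Hzx]; first exact: porbit_id.
have Hz' : pos x y < pos x z.
  have : pos x z != 0 by apply/negP => /eqP H; move: Hzx; rewrite -(iter_pos x z) H eqxx.
  lia.
rewrite -(iter_pos x z).
have Hlz := pos_lt x z.
move: Hz' Hlz; elim: (pos x z) => [//|i IH] Hi HiN.
case: (ltngtP (pos x y) i) => Hc.
- have Hw := IH Hc (ltnW HiN).
  have Hwp : pos x (iter i pi x) = i by rewrite pos_iter //; lia.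
  have Hwx : iter i pi x != x by apply/negP => /eqP Hw'; move: Hwp; rewrite Hw' Hx0; lia.
  have Hwy : iter i pi x != y by apply/negP => /eqP Hw'; move: Hwp; rewrite Hw'; lia.
  have -> : iter i.+1 pi x = pi2 (iter i pi x) by rewrite pi2E tperm_fix.
  exact: porbit_step.
- lia.
- have -> : iter i.+1 pi x = pi2 x by rewrite pi2E tpermL -Hc iterS iter_pos.
  apply: porbit_step; exact: porbit_id.
Qed.
End Arc.
End Single.

Lemma porbit_eq (T : finType) (s : {perm T}) x y :
  y \in porbit s x -> porbit s y = porbit s x.
Proof. by rewrite -eq_porbit_mem => /eqP. Qed.

End P1.
Import P1.

Module P2.

Section Graph.
Variables (V E : finType) (ends : E -> V * V) (sigma : {perm dart E}).
Local Notation D := (dart E).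
Local Notation tl := (tail ends).
Local Notation N := #|{: dart E}|.

Definition alphaX (X : {set E}) (d : D) : D := if d.1 \in X then alpha d else d.

Lemma alphaX_inv (X : {set E}) : involutive (alphaX X).
Proof.
move=> [e b]; rewrite /alphaX /alpha /=; case: (boolP (e \in X)) => H /=; rewrite ?H /= ?negbK //.
by rewrite (negbTE H).
Qed.

Definition aP (X : {set E}) : {perm D} := perm (can_inj (alphaX_inv X)).
Definition tauP (X : {set E}) : {perm D} := (aP X * sigma)%g.

Lemma tauPE (X : {set E}) (d : D) : tauP X d = tour_step sigma X d.
Proof. by rewrite permM permE /alphaX /tour_step; case: ifP. Qed.

Lemma aP_add (X : {set E}) (f : E) : f \notin X -> aP (f |: X) = (tperm (f,true) (f,false) * aP X)%g.
Proof.
move=> fX; apply/permP => [[g b]]; rewrite permM !permE /alphaX /alpha !inE /=.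
case: (eqVneq g f) => [-> | gf] /=.
  by case: b; rewrite !xpair_eqE !eqxx /= ?(negbTE fX).
by rewrite !xpair_eqE (negbTE gf) /=.
Qed.

Lemma tauP_add (X : {set E}) (f : E) : f \notin X -> tauP (f |: X) = (tperm (f,true) (f,false) * tauP X)%g.
Proof. by move=> fX; rewrite /tauP aP_add // mulgA. Qed.

Lemma tauP_del (X : {set E}) (f : E) : f \in X -> tauP (X :\ f) = (tperm (f,true) (f,false) * tauP X)%g.
Proof.
move=> fX; have fX' : f \notin X :\ f by rewrite !inE eqxx.
by rewrite -{2}(setD1K fX) tauP_add // mulgA tperm2 mul1g.
Qed.

Lemma tauP0 : tauP set0 = sigma.
Proof.
apply/permP => d; rewrite /tauP permM permE /alphaX in_set0.
reflexivity.
Qed.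

Definition F (X : {set E}) := #|porbits (tauP X)|.

Lemma F_add (X : {set E}) (f : E) : f \notin X ->
  F (f |: X) + ((f,true) \notin porbit (tauP X) (f,false)).*2 = F X + 1.
Proof. by move=> fX; rewrite /F tauP_add // porbits_mul_tperm xpair_eqE eqxx. Qed.

Lemma adj_sym (X : {set E}) : symmetric (adj ends X).
Proof.
move=> a b; apply/existsP/existsP => [[e He] | [e He]]; exists e;
  by rewrite orbC.
Qed.

Lemma csym (X : {set E}) : connect_sym (adj ends X).
Proof. exact: sym_connect_sym (adj_sym X). Qed.

Lemma connect_mono (X Y : {set E}) : X \subset Y -> forall a b,
  connect (adj ends X) a b -> connect (adj ends Y) a b.
Proof.
move=> XY; apply: connect_sub => a b /existsP [e /andP [eX H]].
apply: connect1; apply/existsP; exists e; rewrite H andbT.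
exact: (subsetP XY).
Qed.

Lemma adj_edge (X : {set E}) (d : D) : d.1 \in X -> adj ends X (tl d) (tl (alpha d)).
Proof.
move=> H; apply/existsP; exists d.1; rewrite H /=.
case: d H => [e [|]] _; rewrite /tail /alpha /= -surjective_pairing eqxx //.
by rewrite orbT.
Qed.

Hypothesis Hrib : ribbon ends sigma.

Lemma tl_sigma d : tl (sigma d) = tl d.
Proof. by case: Hrib => H _; apply: H. Qed.

Lemma tauP_adj (X : {set E}) (d : D) : connect (adj ends X) (tl d) (tl (tauP X d)).
Proof.
rewrite permM tl_sigma permE /alphaX; case: ifP => H; last exact: connect0.
by apply: connect1; apply: adj_edge.
Qed.

Lemma porbit_conn (X : {set E}) (d z : D) : z \in porbit (tauP X) d -> connect (adj ends X) (tl d) (tl z).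
Proof.
move/porbitP => [i ->]; rewrite permX; elim: i => [|i IH] /=; first exact: connect0.
apply: connect_trans IH _; exact: tauP_adj.
Qed.

End Graph.

End P2.
Import P2.

Module P3.

Section Trees.
Variables (V E : finType) (ends : E -> V * V) (sigma : {perm dart E}).
Local Notation D := (dart E).
Local Notation tl := (tail ends).
Local Notation F := (F sigma).
Local Notation tauP := (tauP sigma).

Hypothesis Hrib : ribbon ends sigma.

Definition touch (S : {set V}) (g : E) := ((ends g).1 \in S) || ((ends g).2 \in S).
Definition inside (S : {set V}) (g : E) := ((ends g).1 \in S) && ((ends g).2 \in S).

Lemma leave_set (X : {set E}) (S : {set V}) a r :
  connect (adj ends X) a r -> a \in S -> r \notin S ->
  exists x y, [/\ x \in S, y \notin S & adj ends X x y].
Proof.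
move=> Hc aS rS.
case: (boolP [exists x, [exists y, [&& x \in S, y \notin S & adj ends X x y]]]).
  by move=> /existsP [x /existsP [y /and3P [H1 H2 H3]]]; exists x, y.
move=> H.
have cl : closed (adj ends X) S.
  move=> x y hxy; apply/idP/idP => [xs | ys]; apply/negPn/negP => hn; move/negP: H; apply.
    by apply/existsP; exists x; apply/existsP; exists y; rewrite xs hn hxy.
  by apply/existsP; exists y; apply/existsP; exists x; rewrite ys hn adj_sym.
by have := closed_connect cl Hc; rewrite aS (negbTE rS).
Qed.

Lemma TC1 (X : {set E}) (S : {set V}) r : (forall u w, connect (adj ends X) u w) ->
  r \notin S -> #|S| <= #|[set g in X | touch S g]|.
Proof.
move=> Hc; move: {2}#|S| (erefl #|S|) => n; elim: n S => [|n IH] S HS rS.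
  by rewrite HS.
have [a aS] : exists a, a \in S by apply/card_gt0P; rewrite HS.
have [x [y [xS yS /existsP [g /andP [gX Hg]]]]] := leave_set (Hc a r) aS rS.
have HS2 : #|(S :\ x)| = n by move: HS; rewrite (cardsD1 x) xS; lia.
have rS2 : r \notin (S :\ x) by rewrite !inE (negbTE rS) andbF.
have := IH (S :\ x) HS2 rS2.
have Hsub : [set g in X | touch (S :\ x) g] \proper [set g in X | touch S g].
  apply/properP; split.
    apply/subsetP => h; rewrite /touch !inE => /andP [hX Ht]; rewrite hX /=.
    by case/orP: Ht => /andP [_ H]; rewrite H ?orbT.
  exists g; rewrite !inE gX /touch /=.
    by case/orP: Hg => /eqP -> /=; rewrite ?xS ?orbT.
  by case/orP: Hg => /eqP -> /=; rewrite !inE eqxx /= (negbTE yS) ?andbF.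
have := proper_card Hsub; lia.
Qed.

Lemma F_forest (T : {set E}) : spanning_tree ends T ->
  forall X : {set E}, X \subset T -> F X + #|X| = F set0.
Proof.
move=> [_ HT] X; move: {2}#|X| (erefl #|X|) => n; elim: n X => [|n IH] X HX XT.
  by move/eqP: HX; rewrite cards_eq0 => /eqP ->; rewrite cards0 addn0.
have [f fX] : exists f, f \in X by apply/card_gt0P; rewrite HX.
have fX' : f \notin X :\ f by rewrite !inE eqxx.
have := F_add sigma fX'; rewrite setD1K //.
have Hn : (f,true) \notin porbit (tauP (X :\ f)) (f,false).
  apply/negP => /(porbit_conn Hrib) H.
  have := HT f (subsetP XT f fX); apply/negP/negPn.
  rewrite csym; apply: connect_mono H; apply/subsetP => h; rewrite !inE.
  by move=> /andP [-> hX]; rewrite (subsetP XT).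
rewrite Hn => H.
have XT' : X :\ f \subset T by apply: subset_trans XT; apply: subD1set.
have := IH (X :\ f) _ XT'; move: HX; rewrite (cardsD1 f) fX; lia.
Qed.


Variable d0 : D.

Lemma F0_le : F set0 <= #|V|.
Proof.
rewrite /P2.F tauP0.
pose h (P : {set D}) := tl (odflt d0 [pick z in P]).
have Hh : {in porbits sigma &, injective h}.
  move=> P Q /imsetP [x _ ->] /imsetP [y _ ->]; rewrite /h.
  case: pickP => [a Ha|H]; last by have := H x; rewrite porbit_id.
  case: pickP => [b Hb|H]; last by have := H y; rewrite porbit_id.
  move=> /= Hab.
  have Hba : b \in porbit sigma a by rewrite porbit_fconnect; case: Hrib => _ ->.
  rewrite -(porbit_eq Ha) -(porbit_eq Hb) (porbit_eq Hba) //.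
rewrite -(card_in_imset Hh); exact: max_card.
Qed.

Lemma F_pos (X : {set E}) : 0 < F X.
Proof. by apply/card_gt0P; exists (porbit (tauP X) d0); apply: imset_f. Qed.

Lemma tree_card (T : {set E}) : spanning_tree ends T ->
  [/\ F T = 1, #|T|.+1 = #|V| & F set0 = #|V|].
Proof.
move=> HT; have H1 := F_forest HT (subxx T).
have H2 := F0_le; have H3 := F_pos T.
have H4 : #|[set~ tl d0]| <= #|T|.
  apply: leq_trans (TC1 (proj1 HT) (_ : tl d0 \notin [set~ tl d0])) _.
    by rewrite !inE eqxx.
  by apply: subset_leq_card; apply/subsetP => g; rewrite inE => /andP [].
rewrite cardsC1 in H4.
have H5 : 0 < #|V| by apply/card_gt0P; exists (tl d0).
split; lia.
Qed.

Lemma tree_single (T : {set E}) : spanning_tree ends T ->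
  forall x y, y \in porbit (tauP T) x.
Proof.
move=> HT x y; have [H1 _ _] := tree_card HT.
have /cards1P [P HP] : #|porbits (tauP T)| == 1 by rewrite -/(P2.F _ _) H1.
have Hx : porbit (tauP T) x \in porbits (tauP T) by apply: imset_f.
have Hy : porbit (tauP T) y \in porbits (tauP T) by apply: imset_f.
rewrite HP !inE in Hx Hy; rewrite (eqP Hx) -(eqP Hy); exact: porbit_id.
Qed.

Lemma TC2 (T : {set E}) (S : {set V}) x0 : spanning_tree ends T -> x0 \in S ->
  #|[set g in T | inside S g]| < #|S|.
Proof.
move=> HT xS; have [_ H1 _] := tree_card HT.
have H2 := TC1 (proj1 HT) (_ : x0 \notin ~: S).
have H3 := cardsC S.
have H4 := cardsID [set g | inside S g] T.
have E1 : T :&: [set g | inside S g] = [set g in T | inside S g].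
  by apply/setP => g; rewrite !inE.
have E2 : T :\: [set g | inside S g] = [set g in T | touch (~: S) g].
  by apply/setP => g; rewrite !inE /inside /touch !inE negb_and andbC.
rewrite E1 E2 in H4.
have := H2; rewrite inE xS => /(_ isT); lia.
Qed.

End Trees.

End P3.
Import P3.

Module P4.

Section Planar.
Variables (V E : finType) (ends : E -> V * V) (sigma : {perm dart E}).
Local Notation D := (dart E).
Local Notation tl := (tail ends).
Local Notation F := (F sigma).
Local Notation tauP := (tauP sigma).

Lemma F_mono (Y Z : {set E}) : Y \subset Z -> F Z + #|Y| <= F Y + #|Z|.
Proof.
move: {2}#|Z :\: Y| (erefl #|Z :\: Y|) => n; elim: n Y => [|n IH] Y HYZ YZ.
  have : Z :\: Y == set0 by rewrite -cards_eq0 HYZ.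
  rewrite setD_eq0 => ZY.
  have -> : Y = Z by apply/eqP; rewrite eqEsubset YZ ZY.
  by rewrite addnC.
have [f fZY] : exists f, f \in Z :\: Y by apply/card_gt0P; rewrite HYZ.
move: (fZY); rewrite inE => /andP [fY fZ].
have H1 := F_add sigma fY.
have H2 : #|f |: Y| = #|Y| + 1 by rewrite cardsU1 fY addnC.
have H3 : #|Z :\: (f |: Y)| = n.
  have -> : Z :\: (f |: Y) = (Z :\: Y) :\ f.
    by apply/setP => h; rewrite !inE negb_or andbA.
  by move: HYZ; rewrite (cardsD1 f) fZY; lia.
have H4 : f |: Y \subset Z by rewrite subUset sub1set fZ YZ.
have := IH (f |: Y) H3 H4; lia.
Qed.

Lemma F_setT : F setT = nfaces sigma.
Proof.
rewrite /P2.F card_porbits_fcard; apply: eq_fcard => d.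
by rewrite /tauP permM permE /alphaX in_setT.
Qed.

Hypothesis Hrib : ribbon ends sigma.
Hypothesis Hplanar : planar V sigma.

Lemma planar_split (T : {set E}) (e g : E) : spanning_tree ends T ->
  e \notin T -> g \notin e |: T -> (g,true) \in porbit (tauP (e |: T)) (g,false).
Proof.
move=> HT eT geT.
have [H0 HcT _] := tree_card Hrib (e,true) HT.
have H1 := F_add sigma eT.
have H2 := F_add sigma geT.
have H3 := F_mono (subsetT (g |: (e |: T))).
rewrite F_setT cardsT in H3.
have H4 : #|g |: (e |: T)| = #|T| + 2 by rewrite !cardsU1 geT eT; lia.
move: Hplanar; rewrite /planar => HP.
have H1' : F (e |: T) <= 2 by move: H1; rewrite H0; case: (_ \notin _) => /=; lia.
case: (boolP ((g,true) \in porbit (tauP (e |: T)) (g,false))) => // Hn.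
rewrite Hn /= in H2; lia.
Qed.

End Planar.

End P4.
Import P4.

Module P5.

Section Eta.
Variables (V E : finType) (ends : E -> V * V) (sigma : {perm dart E}).
Local Notation D := (dart E).
Local Notation tl := (tail ends).
Local Notation tauP := (tauP sigma).
Local Notation N := #|{: dart E}|.
Hypothesis Hrib : ribbon ends sigma.

Definition etaS (X : {set E}) (s : D) (g : E) : V :=
  tl (nth s (traject (tour_step sigma X) s N)
        (find (fun d : D => d.1 == g) (traject (tour_step sigma X) s N))).

Definition beta (X : {set E}) (s : D) : divisor V :=
  fun u => Posz #|[set g | (g \notin X) && (etaS X s g == u)]|.

Lemma bernardiE (X : {set E}) v e : bernardi ends sigma X v e = beta X (start_dart ends v e).
Proof. by []. Qed.

Lemma trj_eq (X : {set E}) s :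
  traject (tour_step sigma X) s N = traject (tauP X) s N.
Proof. by elim: N s => [|n IH] s //=; rewrite IH tauPE. Qed.

Lemma dart_eq (d z : D) : d.1 = z.1 -> d = z \/ d = alpha z.
Proof.
case: d z => [g b] [h c] /= ->; case: b; case: c; rewrite /alpha /=; by [left|right].
Qed.

Lemma alphaK (z : D) : alpha (alpha z) = z.
Proof. by case: z => g b; rewrite /alpha /= negbK. Qed.

Lemma alpha_neq (z : D) : alpha z != z.
Proof. by case: z => g b; rewrite /alpha xpair_eqE eqxx /=; case: b. Qed.

Section Tree.
Variable X : {set E}.
Hypothesis HX : spanning_tree ends X.
Let single s := tree_single Hrib s HX.
Local Notation pos := (pos (tauP X)).

Lemma NE s : N = #|porbit (tauP X) s|.
Proof. by rewrite (card_porbit_all (single s) s). Qed.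

Lemma posN_lt s z : pos s z < N.
Proof. by rewrite (NE s) (card_porbit_all (single s) s); apply: pos_lt (single s) _ _. Qed.

Lemma posN_shift s j z : j <= N ->
  pos (iter j (tauP X) s) z = if j <= pos s z then pos s z - j else pos s z + N - j.
Proof.
rewrite (NE s) (card_porbit_all (single s) s) => Hj.
exact: pos_shift (single s) s j z Hj.
Qed.

Lemma posN_iter s i : i < N -> pos s (iter i (tauP X) s) = i.
Proof.
rewrite (NE s) (card_porbit_all (single s) s) => Hi.
exact: pos_iter (single s) s i Hi.
Qed.

Lemma eta_first s z : pos s z < pos s (alpha z) -> etaS X s z.1 = tl z.
Proof.
move=> Hlt; rewrite /etaS trj_eq.
set t := traject _ s N; set p := (fun d : D => d.1 == z.1).
have Hu : uniq t by exact: (uniq_traj (single s)).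
have Hz : z \in t by exact: (mem_traj (single s)).
have Hhas : has p t by apply/hasP; exists z => //; rewrite /p eqxx.
have Hk := has_find p t; rewrite Hhas in Hk.
have Hn := nth_find s Hhas.
case: (dart_eq (eqP Hn)) => Hc; first by rewrite Hc.
exfalso.
have Hpk : find p t = pos s (alpha z).
  by rewrite /P1.pos -/t -Hc index_uniq.
have := @before_find _ s p t (pos s z); rewrite Hpk => /(_ Hlt).
rewrite /p /P1.pos -/t nth_index //.
by move=> /negbT /negP; apply; apply/eqP.
Qed.

Lemma pos_alpha_neq s z : pos s z != pos s (alpha z).
Proof. by apply/negP => /eqP /(pos_inj (single s)) H; move: (alpha_neq z); rewrite -H eqxx. Qed.

Lemma eta_end s g : etaS X s g = tl (g,true) \/ etaS X s g = tl (g,false).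
Proof.
have := pos_alpha_neq s (g,true).
case: (ltngtP (pos s (g,true)) (pos s (alpha (g,true)))) => // H _.
  by left; apply: (eta_first H).
by right; apply: (@eta_first s (g,false)).
Qed.

Lemma eta_shift_same s j z : j <= N ->
  (pos s z < j) = (pos s (alpha z) < j) -> etaS X (iter j (tauP X) s) z.1 = etaS X s z.1.
Proof.
move=> Hj Heq.
have Hs := posN_shift s z Hj.
have Hs' := posN_shift s (alpha z) Hj.
have L1 := posN_lt s z; have L2 := posN_lt s (alpha z).
have Hne := pos_alpha_neq s z.
move: Hne Heq; case: (ltngtP (pos s z) (pos s (alpha z))) => // Hc _ Heq.
- rewrite (eta_first Hc) eta_first //.
  rewrite Hs Hs'; move: Heq.
  by case: (leqP j (pos s z)) => h1; case: (leqP j (pos s (alpha z))) => h2; lia.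
- have Hc' : pos s (alpha z) < pos s (alpha (alpha z)) by rewrite alphaK.
  have -> : z.1 = (alpha z).1 by [].
  rewrite (eta_first Hc') eta_first //.
  rewrite alphaK Hs Hs'; move: Heq.
  by case: (leqP j (pos s z)) => h1; case: (leqP j (pos s (alpha z))) => h2; lia.
Qed.

Lemma eta_shift_swap s j z : j <= N ->
  pos s z < j <= pos s (alpha z) ->
  etaS X s z.1 = tl z /\ etaS X (iter j (tauP X) s) z.1 = tl (alpha z).
Proof.
move=> Hj /andP [H1 H2].
have Hs := posN_shift s z Hj.
have Hs' := posN_shift s (alpha z) Hj.
have L1 := posN_lt s z; have L2 := posN_lt s (alpha z).
split; first by apply: eta_first; lia.
have -> : z.1 = (alpha z).1 by [].
apply: eta_first; rewrite alphaK Hs Hs'.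
by case: (leqP j (pos s z)) => h1; case: (leqP j (pos s (alpha z))) => h2; lia.
Qed.

End Tree.
End Eta.

End P5.
Import P5.

Module P6.

Section Lap.
Variables (V E : finType) (ends : E -> V * V).
Local Notation D := (dart E).
Local Notation tl := (tail ends).
Local Open Scope ring_scope.

Definition lapE (f : V -> int) (g : E) (u : V) : int :=
  if (ends g).1 == u then f u - f (ends g).2
  else if (ends g).2 == u then f u - f (ends g).1 else 0.

Lemma lapP f u : laplacian ends f u = \sum_(g : E) lapE f g u.
Proof. by []. Qed.

Lemma lap_sub f h u :
  laplacian ends (fun x => f x - h x) u = laplacian ends f u - laplacian ends h u.
Proof.
rewrite !lapP -sumrB; apply: eq_bigr => g _; rewrite /lapE.
case: ifP => _; first lia; case: ifP => _; lia.
Qed.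

Lemma lap_const c u : laplacian ends (fun _ => c) u = 0.
Proof.
rewrite lapP big1 // => g _; rewrite /lapE.
by case: ifP => _; rewrite ?subrr //; case: ifP => _; rewrite ?subrr.
Qed.

Definition ind (W : {set V}) (x : V) : int := (x \in W)%:Z.
Definition dl (a u : V) : int := (a == u)%:Z.

Hypothesis Hloop : loopless ends.

Lemma lap_same (W : {set V}) (g : E) (u : V) : ((ends g).1 \in W) = ((ends g).2 \in W) -> lapE (ind W) g u = 0.
Proof.
rewrite /lapE /ind => H; case: (eqVneq (ends g).1 u) => [<-|_]; first by rewrite H subrr.
by case: (eqVneq (ends g).2 u) => [<-|_] //; rewrite H subrr.
Qed.

Lemma lap_cross (W : {set V}) (z : D) (u : V) : tl z \in W -> tl (alpha z) \notin W ->
  lapE (ind W) z.1 u = dl (tl z) u - dl (tl (alpha z)) u.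
Proof.
have Hl := Hloop z.1.
case: z Hl => g [] /= Hl; rewrite /tail /alpha /= => H1 H2; rewrite /lapE /ind /dl.
- case: (eqVneq (ends g).1 u) => [E1|E1].
    subst u; rewrite eq_sym (negbTE Hl) H1 (negbTE H2) /=; lia.
  case: (eqVneq (ends g).2 u) => [E2|E2] //.
  subst u; rewrite H1 (negbTE H2) /=; lia.
- case: (eqVneq (ends g).1 u) => [E1|E1].
    subst u; rewrite eq_sym (negbTE Hl) H1 (negbTE H2) /=; lia.
  case: (eqVneq (ends g).2 u) => [E2|E2] //.
  subst u; rewrite H1 (negbTE H2) /=; lia.
Qed.

Lemma sum_card (P : pred E) : Posz #|[set g | P g]| = \sum_g (P g)%:Z.
Proof.
rewrite -(big_morph Posz PoszD (erefl (Posz 0))) -sum1_card big_mkcond /=.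
by congr Posz; apply: eq_bigr => g _; rewrite inE; case: (P g).
Qed.

End Lap.

Section Assemble.
Variables (V E : finType) (ends : E -> V * V) (sigma : {perm dart E}).
Local Notation D := (dart E).
Local Open Scope ring_scope.

Lemma assemble (X : {set E}) (s s' : D) (phi : V -> int) (e : E) (c : V -> int) :
  (forall g u, g != e ->
     ((g \notin X) && (etaS ends sigma X s g == u))%:Z
     - ((g \notin X) && (etaS ends sigma X s' g == u))%:Z = lapE ends phi g u) ->
  (forall u, ((e \notin X) && (etaS ends sigma X s e == u))%:Z
     - ((e \notin X) && (etaS ends sigma X s' e == u))%:Z - c u = lapE ends phi e u) ->
  forall u, beta ends sigma X s u - beta ends sigma X s' u - c u = laplacian ends phi u.
Proof.
move=> H1 H2 u; rewrite /beta !sum_card lapP.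
rewrite (bigD1 e) //= [X in _ - X - _](bigD1 e) //= [in RHS](bigD1 e) //=.
rewrite -(H2 u).
have -> : \sum_(i | i != e) lapE ends phi i u =
   \sum_(i | i != e) (((i \notin X) && (etaS ends sigma X s i == u))%:Z
     - ((i \notin X) && (etaS ends sigma X s' i == u))%:Z).
  by apply: eq_bigr => g Hg; rewrite H1.
rewrite sumrB; ring.
Qed.
End Assemble.

End P6.
Import P6.

Module P7.

Section Moves.
Variables (V E : finType) (ends : E -> V * V) (sigma : {perm dart E}).
Local Notation D := (dart E).
Local Notation tl := (tail ends).
Local Notation tauP := (tauP sigma).
Local Notation N := #|{: dart E}|.
Hypothesis Hrib : ribbon ends sigma.
Hypothesis Hloop : loopless ends.
Hypothesis Hplanar : planar V sigma.

Variable X : {set E}.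
Hypothesis HX : spanning_tree ends X.
Let single s := tree_single Hrib s HX.
Local Notation pos := (pos (tauP X)).
Local Notation etaS := (etaS ends sigma X).
Local Notation beta := (beta ends sigma X).

Definition cst (s : D) (u : V) : int := (dl (tl s) u - dl (tl (alpha s)) u)%R.

Definition moveP (s s' : D) := exists phi : V -> int, forall u,
   (beta s u - beta s' u - cst s u = laplacian ends phi u)%R.

Lemma tperm_s (s : D) : tperm s (alpha s) = tperm (s.1,true) (s.1,false).
Proof. by case: s => e [] //=; rewrite tpermC. Qed.

Lemma pos_s0 s : pos s s = 0.
Proof. exact: (pos_self (tauP X) s). Qed.

Lemma pos_as s : 0 < pos s (alpha s).
Proof. by have := pos_alpha_neq Hrib HX s s; rewrite pos_s0 lt0n eq_sym. Qed.

Lemma pos_as_lt s : pos s (alpha s) < N.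
Proof. exact: (posN_lt Hrib HX). Qed.

Lemma pos_other s z : z.1 != s.1 -> 0 < pos s z /\ pos s z != pos s (alpha s).
Proof.
move=> Hz; split.
  rewrite lt0n; apply/negP => /eqP H.
  have : pos s z = pos s s by rewrite H pos_s0.
  move/(pos_inj (single s)).
  by move=> Hzs; rewrite Hzs eqxx in Hz.
apply/negP => /eqP /(pos_inj (single s)) Hzs; by rewrite Hzs eqxx in Hz.
Qed.

Lemma lapE0 g u : lapE ends (fun _ => 0%R) g u = 0%R.
Proof. by rewrite /lapE; case: ifP => _; rewrite ?subrr //; case: ifP => _; rewrite ?subrr. Qed.

Lemma move_nontree s j : s.1 \notin X -> 0 < j <= pos s (alpha s) ->
  (forall g, g != s.1 -> g \notin X -> etaS (iter j (tauP X) s) g = etaS s g) ->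
  moveP s (iter j (tauP X) s).
Proof.
move=> Hs Hj Hg; exists (fun _ => 0%R); apply: (assemble (e := s.1)).
  move=> g u Hgs; rewrite lapE0.
  case: (boolP (g \in X)) => gX /=; first by rewrite subrr.
  by rewrite Hg // subrr.
move=> u; rewrite lapE0 Hs /=.
have Hjn : j <= N by have := pos_as_lt s; lia.
have Hsw : pos s s < j <= pos s (alpha s) by rewrite pos_s0.
have [E1 E2] := eta_shift_swap Hrib HX Hjn Hsw.
rewrite E1 E2 /cst; ring.
Qed.

Lemma tauP_nontree (s : D) : s.1 \notin X -> tauP X s = sigma s.
Proof. by move=> Hs; rewrite /P2.tauP permM permE /alphaX (negbTE Hs). Qed.

Lemma move_rot_nontree s : s.1 \notin X -> moveP s (sigma s).
Proof.
move=> Hs; rewrite -tauP_nontree //.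
have -> : tauP X s = iter 1 (tauP X) s by [].
apply: move_nontree => //; first by rewrite pos_as.
move=> g Hgs gX.
have Hj1 : 1 <= N by have := pos_as_lt s; lia.
have [H1 _] := pos_other (z := (g,true)) Hgs.
have [H2 _] := pos_other (z := alpha (g,true)) Hgs.
apply: (eta_shift_same Hrib HX (z := (g,true)) Hj1); lia.
Qed.

Lemma move_flip_nontree s : s.1 \notin X -> moveP s (alpha s).
Proof.
move=> Hs.
have -> : alpha s = iter (pos s (alpha s)) (tauP X) s by rewrite (iter_pos (single s)).
apply: move_nontree => //; first by rewrite pos_as leqnn.
move=> g Hgs gX.
have Hj1 : pos s (alpha s) <= N by have := pos_as_lt s; lia.
have [H1 H1'] := pos_other (z := (g,true)) Hgs.
have [H2 H2'] := pos_other (z := alpha (g,true)) Hgs.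
have gX' : g \notin s.1 |: X by rewrite !inE negb_or Hgs.
have Hsp := planar_split Hrib Hplanar HX Hs gX'.
rewrite tauP_add // -tperm_s in Hsp.
have Hxy : s != alpha s by rewrite eq_sym alpha_neq.
have Har := P1.arc (single s) Hxy.
have Heq : ((g,true) \in porbit (tperm s (alpha s) * tauP X)%g (alpha s)) =
           ((g,false) \in porbit (tperm s (alpha s) * tauP X)%g (alpha s)).
  by rewrite -!eq_porbit_mem (porbit_eq Hsp).
rewrite !Har in Heq.
apply: (eta_shift_same Hrib HX (z := (g,true)) Hj1).
move: Heq H1 H1' H2 H2'; rewrite /alpha /=.
case: (ltngtP (pos s (g,true)) (pos s (alpha s))); case: (ltngtP (pos s (g,false)) (pos s (alpha s)));
  move=> ? ? /=; lia.
Qed.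

Definition Wset (s : D) : {set V} :=
  [set x | connect (adj ends (X :\ s.1)) (tl (alpha s)) x].

Lemma not_conn_s s : s.1 \in X -> ~~ connect (adj ends (X :\ s.1)) (tl s) (tl (alpha s)).
Proof.
case: HX => _ HT Hs; have := HT _ Hs.
by case: s Hs => e [] /= _; rewrite /tail /alpha /= // csym.
Qed.

Lemma W_arc s z : s.1 \in X -> (tl z \in Wset s) = (0 < pos s z <= pos s (alpha s)).
Proof.
move=> Hs; have Hxy : s != alpha s by rewrite eq_sym alpha_neq.
have Har := P1.arc (single s) Hxy z.
have Hdel : tauP (X :\ s.1) = (tperm s (alpha s) * tauP X)%g by rewrite tperm_s tauP_del.
rewrite -Har -Hdel inE.
apply/idP/idP => [Hc | Ho]; last exact: (porbit_conn Hrib Ho).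
apply/negPn/negP => Hn.
move: Hn; rewrite Hdel => /(arc_other (single s) Hxy); rewrite -Hdel => /(porbit_conn Hrib) H2.
have := not_conn_s Hs; apply/negP/negPn.
by apply: connect_trans H2 _; rewrite csym.
Qed.

Lemma W_same s g : s.1 \in X -> g \in X -> g != s.1 ->
  ((ends g).1 \in Wset s) = ((ends g).2 \in Wset s).
Proof.
move=> Hs gX Hgs.
have A : adj ends (X :\ s.1) (ends g).1 (ends g).2.
  by apply: (@adj_edge _ _ ends (X :\ s.1) (g,true)); rewrite !inE Hgs gX.
rewrite !inE; apply/idP/idP => H.
  exact: connect_trans H (connect1 A).
by apply: connect_trans H (connect1 _); rewrite adj_sym.
Qed.

Lemma move_tree s j : s.1 \in X -> (j = pos s (alpha s) \/ j = (pos s (alpha s)).+1) ->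
  moveP s (iter j (tauP X) s).
Proof.
move=> Hs Hj.
have HjN : j <= N by have := pos_as_lt s; case: Hj => ->; lia.
have key : forall z, z.1 != s.1 -> (pos s z < j) = (tl z \in Wset s).
  move=> z Hz; rewrite W_arc //; have [H1 H2] := pos_other Hz; have := pos_as s.
  by case: Hj => -> _; (apply/idP/andP; [move=> ?; split; lia | case; lia]).
exists (ind (Wset s)); apply: (assemble (e := s.1)).
- move=> g u Hgs.
  have Kt := key (g,true) Hgs; have Kf := key (g,false) Hgs.
  case: (boolP (g \in X)) => gX /=.
    by rewrite subrr lap_same // W_same.
  case: (boolP ((tl (g,true) \in Wset s) == (tl (g,false) \in Wset s))) => Heq.
    have Hsh : (pos s (g,true) < j) = (pos s (alpha (g,true)) < j).
      by rewrite Kt; have -> : alpha (g,true) = (g,false) by []; rewrite Kf (eqP Heq).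
    rewrite (eta_shift_same Hrib HX HjN Hsh) subrr lap_same //.
    exact: (eqP Heq).
  case: (boolP (tl (g,true) \in Wset s)) => Hw.
    have Hw' : tl (g,false) \notin Wset s by move: Heq; rewrite Hw; case: (_ \in _).
    have Hsw : pos s (g,true) < j <= pos s (alpha (g,true)).
      by rewrite Kt Hw /= leqNgt; have -> : alpha (g,true) = (g,false) by []; rewrite Kf Hw'.
    have [E1 E2] := eta_shift_swap Hrib HX HjN Hsw.
    by rewrite E1 E2 (lap_cross Hloop (z := (g,true))).
  have Hw' : tl (g,false) \in Wset s by move: Heq; rewrite (negbTE Hw); case: (_ \in _).
  have Hsw : pos s (g,false) < j <= pos s (alpha (g,false)).
    by rewrite Kf Hw' /= leqNgt; have -> : alpha (g,false) = (g,true) by []; rewrite Kt (negbTE Hw).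
  have [E1 E2] := eta_shift_swap Hrib HX HjN Hsw.
  by rewrite E1 E2 (lap_cross Hloop (z := (g,false))).
- move=> u; rewrite Hs /=.
  have H1 : tl (alpha s) \in Wset s by rewrite inE connect0.
  have H2 : tl (alpha (alpha s)) \notin Wset s.
    by rewrite alphaK inE csym; apply: not_conn_s.
  have -> : s.1 = (alpha s).1 by [].
  rewrite (@lap_cross _ _ ends Hloop (Wset s) (alpha s) u H1 H2) alphaK /cst; ring.
Qed.

Lemma move_rot s : moveP s (sigma s).
Proof.
case: (boolP (s.1 \in X)) => Hs; last exact: move_rot_nontree.
have -> : sigma s = iter (pos s (alpha s)).+1 (tauP X) s.
  rewrite iterS (iter_pos (single s)) /P2.tauP permM permE /alphaX /=.
  by rewrite Hs alphaK.
by apply: move_tree => //; right.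
Qed.

Lemma move_flip s : moveP s (alpha s).
Proof.
case: (boolP (s.1 \in X)) => Hs; last exact: move_flip_nontree.
have -> : alpha s = iter (pos s (alpha s)) (tauP X) s by rewrite (iter_pos (single s)).
by apply: move_tree => //; left.
Qed.

End Moves.

End P7.
Import P7.

Module P8.

Section Rel.
Variables (V E : finType) (ends : E -> V * V) (sigma : {perm dart E}).
Local Notation D := (dart E).
Local Notation tl := (tail ends).
Local Notation beta := (beta ends sigma).
Hypothesis Hrib : ribbon ends sigma.
Hypothesis Hloop : loopless ends.
Hypothesis Hplanar : planar V sigma.
Local Open Scope ring_scope.

Lemma lap_add f h u :
  laplacian ends (fun x => f x + h x) u = laplacian ends f u + laplacian ends h u.
Proof.
rewrite !lapP -big_split; apply: eq_bigr => g _; rewrite /lapE /=.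
case: ifP => _; first ring; case: ifP => _; ring.
Qed.

Definition Rel (s s' : D) := forall X Y, spanning_tree ends X -> spanning_tree ends Y ->
  lin_equiv ends (fun u => beta X s u - beta Y s u) (fun u => beta X s' u - beta Y s' u).

Lemma Rel_move s s' : (forall X, spanning_tree ends X -> moveP ends sigma X s s') -> Rel s s'.
Proof.
move=> H X Y HX HY; have [f Hf] := H X HX; have [h Hh] := H Y HY.
exists (fun x => f x - h x) => u; rewrite lap_sub -Hf -Hh; ring.
Qed.

Lemma Rel_refl s : Rel s s.
Proof. by move=> X Y _ _; exists (fun _ => 0) => u; rewrite lap_const subrr. Qed.

Lemma Rel_sym s s' : Rel s s' -> Rel s' s.
Proof.
move=> H X Y HX HY; have [f Hf] := H X Y HX HY.
exists (fun x => 0 - f x) => u; rewrite lap_sub lap_const -Hf; ring.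
Qed.

Lemma Rel_trans s1 s2 s3 : Rel s1 s2 -> Rel s2 s3 -> Rel s1 s3.
Proof.
move=> H1 H2 X Y HX HY; have [f Hf] := H1 X Y HX HY; have [h Hh] := H2 X Y HX HY.
exists (fun x => f x + h x) => u; rewrite lap_add -Hf -Hh; ring.
Qed.

Lemma Rel_rot s : Rel s (sigma s).
Proof. by apply: Rel_move => X HX; apply: move_rot. Qed.

Lemma Rel_flip s : Rel s (alpha s).
Proof. by apply: Rel_move => X HX; apply: move_flip. Qed.

Lemma Rel_vertex z z' : tl z = tl z' -> Rel z z'.
Proof.
case: Hrib => _ H /H Hc.
rewrite -(iter_findex Hc); elim: (findex _ z z') => [|i IH] /=; first exact: Rel_refl.
exact: Rel_trans IH (Rel_rot _).
Qed.

Hypothesis Hconn : connected_graph ends.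

Lemma Rel_all s s' : Rel s s'.
Proof.
suff K : forall b, connect (adj ends setT) (tl s) b -> forall z, tl z = b -> Rel s z.
  by apply: (K (tl s')) => //; apply: Hconn.
move=> b /connectP [p Hp ->] {b}.
elim/last_ind: p Hp => [|p c IH] /=; first by move=> _ z Hz; apply: Rel_vertex.
rewrite rcons_path last_rcons => /andP [Hp Hc] z Hz.
have IH' := IH Hp.
move: Hc => /existsP [g /andP [_ /orP [] /eqP Hg]].
- have H1 : tl (g,true) = last (tl s) p by rewrite /tail /= Hg.
  have H2 : tl (alpha (g,true)) = c by rewrite /tail /= Hg.
  apply: Rel_trans (IH' _ H1) _; apply: Rel_trans (Rel_flip _) _.
  by apply: Rel_vertex; rewrite H2.
- have H1 : tl (g,false) = last (tl s) p by rewrite /tail /= Hg.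
  have H2 : tl (alpha (g,false)) = c by rewrite /tail /= Hg.
  apply: Rel_trans (IH' _ H1) _; apply: Rel_trans (Rel_flip _) _.
  by apply: Rel_vertex; rewrite H2.
Qed.

End Rel.

End P8.
Import P8.

Module P9.
Import Order.TTheory.

Lemma exists_max (T : finType) (x0 : T) (F : T -> int) : exists xm, forall x, (F x <= F xm)%R.
Proof. by case: (@arg_maxP _ _ T x0 xpredT F isT) => xm _ H; exists xm => x; apply: H. Qed.

Section Sums.
Variables (V E : finType) (ends : E -> V * V).
Local Open Scope ring_scope.

Lemma sum_pick (S : {set V}) (a : V) (c : int) :
  \sum_(x in S) (if a == x then c else 0) = if a \in S then c else 0.
Proof.
rewrite big_mkcond /= (bigD1 a) //= eqxx big1 ?addr0 // => x /negbTE Hx.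
by rewrite eq_sym Hx; case: (_ \in _).
Qed.

Lemma sum_pickb (S : {set V}) (a : V) (b : bool) :
  \sum_(x in S) (b && (a == x))%:Z = (b && (a \in S))%:Z.
Proof.
rewrite big_mkcond /= (bigD1 a) //= eqxx big1 ?addr0.
  by case: (a \in S); case: b.
by move=> x /negbTE Hx; rewrite eq_sym Hx andbF; case: (_ \in _).
Qed.

Hypothesis Hloop : loopless ends.

Lemma lapE_sum (phi : V -> int) (S : {set V}) (g : E) :
  \sum_(x in S) lapE ends phi g x =
  (if (ends g).1 \in S then phi (ends g).1 - phi (ends g).2 else 0)
  + (if (ends g).2 \in S then phi (ends g).2 - phi (ends g).1 else 0).
Proof.
have H : forall x, lapE ends phi g x =
  (if (ends g).1 == x then phi (ends g).1 - phi (ends g).2 else 0)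
  + (if (ends g).2 == x then phi (ends g).2 - phi (ends g).1 else 0).
  move=> x; rewrite /lapE; have Hl := Hloop g.
  case: (eqVneq (ends g).1 x) => [<-|H1]; first by rewrite eq_sym (negbTE Hl) addr0.
  by case: (eqVneq (ends g).2 x) => [<-|H2]; rewrite ?add0r.
rewrite (eq_bigr _ (fun x _ => H x)) big_split /= !sum_pick //.
Qed.

End Sums.

Section BU.
Variables (V E : finType) (ends : E -> V * V) (sigma : {perm dart E}).
Local Notation D := (dart E).
Hypothesis Hrib : ribbon ends sigma.
Hypothesis Hloop : loopless ends.
Local Notation beta := (beta ends sigma).
Local Notation etaS := (etaS ends sigma).
Local Notation touch := (touch ends).
Local Notation inside := (inside ends).
Local Open Scope ring_scope.

Lemma sum_beta (X : {set E}) (s : D) (S : {set V}) :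
  \sum_(x in S) beta X s x = \sum_g ((g \notin X) && (etaS X s g \in S))%:Z.
Proof.
rewrite /beta; under eq_bigr => x _ do rewrite sum_card.
rewrite exchange_big /=; apply: eq_bigr => g _; exact: sum_pickb.
Qed.

Lemma eta_mem (X : {set E}) s g (S : {set V}) : spanning_tree ends X ->
  etaS X s g \in S -> touch S g.
Proof.
move=> HX; have [He|He] := eta_end Hrib HX s g; rewrite He /tail /= /P3.touch => ->;
  by rewrite ?orbT.
Qed.

Lemma eta_mem2 (X : {set E}) s g (S : {set V}) : spanning_tree ends X ->
  inside S g -> etaS X s g \in S.
Proof.
move=> HX; have [He|He] := eta_end Hrib HX s g; rewrite He /tail /= /P3.inside;
  by case/andP.
Qed.

Lemma LA (X : {set E}) s g (S : {set V}) : spanning_tree ends X ->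
  ((g \notin X) && (etaS X s g \in S))%:Z <= (touch S g)%:Z - ((g \in X) && touch S g)%:Z.
Proof.
move=> HX; case: (boolP (g \in X)) => gX /=; first by rewrite subrr.
case: (boolP (etaS X s g \in S)) => H /=.
  by rewrite (eta_mem HX H) /=.
by case: (touch S g).
Qed.

Lemma LB (X : {set E}) s g (S : {set V}) : spanning_tree ends X ->
  (inside S g)%:Z - ((g \in X) && inside S g)%:Z <= ((g \notin X) && (etaS X s g \in S))%:Z.
Proof.
move=> HX; case: (boolP (g \in X)) => gX /=; first by rewrite subrr.
case: (boolP (inside S g)) => H /=; last by rewrite subrr; case: (_ \in _).
by rewrite (eta_mem2 _ HX H).
Qed.

Lemma break_uniq (X1 X2 : {set E}) (s : D) : spanning_tree ends X1 -> spanning_tree ends X2 ->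
  lin_equiv ends (beta X1 s) (beta X2 s) -> forall u, beta X1 s u = beta X2 s u.
Proof.
move=> H1 H2 [phi Hphi].
have [xm Hm] := exists_max (tail ends s) phi.
case: (boolP [forall x, phi x == phi xm]) => Hall.
  move=> u; apply/eqP; rewrite -subr_eq0; apply/eqP; rewrite Hphi lapP big1 // => g _.
  rewrite /lapE; move/forallP: Hall => Ha.
  by rewrite !(eqP (Ha _)) subrr; case: ifP => //; case: ifP.
exfalso.
move/forallPn: Hall => [r Hr].
pose S := [set x | phi x == phi xm].
have rS : r \notin S by rewrite inE.
have xS : xm \in S by rewrite inE.
have Hsum : \sum_(x in S) (beta X1 s x - beta X2 s x) = \sum_(x in S) laplacian ends phi x.
  by apply: eq_bigr => x _; apply: Hphi.
rewrite sumrB !sum_beta in Hsum.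
have Hsum2 : \sum_(x in S) laplacian ends phi x = \sum_g \sum_(x in S) lapE ends phi g x.
  under eq_bigr do rewrite lapP.
  exact: exchange_big.
rewrite Hsum2 in Hsum.
have SA : \sum_g ((g \notin X1) && (etaS X1 s g \in S))%:Z <=
          \sum_g ((touch S g)%:Z - ((g \in X1) && touch S g)%:Z).
  by apply: ler_sum => g _; apply: LA.
have SB : \sum_g ((inside S g)%:Z - ((g \in X2) && inside S g)%:Z) <=
          \sum_g ((g \notin X2) && (etaS X2 s g \in S))%:Z.
  by apply: ler_sum => g _; apply: LB.
have SC : \sum_g ((touch S g)%:Z - (inside S g)%:Z) <= \sum_g \sum_(x in S) lapE ends phi g x.
  apply: ler_sum => g _; rewrite lapE_sum // /P3.touch /P3.inside !inE.
  have := Hm (ends g).1; have := Hm (ends g).2.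
  case: (eqVneq (phi (ends g).1) (phi xm)) => E1; case: (eqVneq (phi (ends g).2) (phi xm)) => E2 /=;
    lia.
have T1 := TC1 (proj1 H1) rS.
have T2 := TC2 Hrib s H2 xS.
have C1 : Posz #|[set g in X1 | touch S g]| = \sum_g ((g \in X1) && touch S g)%:Z.
  by rewrite sum_card; apply: eq_bigr => g _.
have C2 : Posz #|[set g in X2 | inside S g]| = \sum_g ((g \in X2) && inside S g)%:Z.
  by rewrite sum_card; apply: eq_bigr => g _.
rewrite !sumrB in SA SB SC.
move: T1 T2 C1 C2 SA SB SC Hsum.
set a1 := \sum_g ((g \in X1) && touch S g)%:Z.
set a2 := \sum_g ((g \in X2) && inside S g)%:Z.
set a3 := \sum_g (touch S g)%:Z.
set a4 := \sum_g (inside S g)%:Z.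
set a5 := \sum_g ((g \notin X1) && (etaS X1 s g \in S))%:Z.
set a6 := \sum_g ((g \notin X2) && (etaS X2 s g \in S))%:Z.
set a7 := \sum_g \sum_(x in S) lapE ends phi g x.
set n1 := #|[set g in X1 | touch S g]|.
set n2 := #|[set g in X2 | inside S g]|.
lia.
Qed.

End BU.

End P9.
Import P9.

Module P10.

Lemma tauP_agree (E : finType) (sigma : {perm dart E}) (X Y : {set E}) (z : dart E) :
  (z.1 \in X) = (z.1 \in Y) -> tauP sigma X z = tauP sigma Y z.
Proof. by move=> H; rewrite /tauP !permM !permE /alphaX H. Qed.

Section Inj.
Variables (V E : finType) (ends : E -> V * V) (sigma : {perm dart E}).
Local Notation D := (dart E).
Local Notation tl := (tail ends).
Local Notation N := #|{: dart E}|.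
Hypothesis Hrib : ribbon ends sigma.
Hypothesis Hloop : loopless ends.
Local Notation beta := (beta ends sigma).
Local Notation etaS := (etaS ends sigma).
Local Notation touch := (touch ends).
Local Notation inside := (inside ends).

Variables (Ta Tb : {set E}) (s : D) (k : nat).
Hypothesis Ha : spanning_tree ends Ta.
Hypothesis Hb : spanning_tree ends Tb.
Hypothesis Hk : k < N.
Hypothesis Hpre : forall i, i < k ->
  ((iter i (tauP sigma Ta) s).1 \in Ta) = ((iter i (tauP sigma Ta) s).1 \in Tb).
Let d := iter k (tauP sigma Ta) s.
Hypothesis Hfa : d.1 \in Ta.
Hypothesis Hfb : d.1 \notin Tb.
Hypothesis Heq : forall u, beta Ta s u = beta Tb s u.

Local Notation pa := (pos (tauP sigma Ta) s).
Local Notation pb := (pos (tauP sigma Tb) s).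
Let singa := tree_single Hrib s Ha.
Let singb := tree_single Hrib s Hb.

Lemma L1 i : i <= k -> iter i (tauP sigma Tb) s = iter i (tauP sigma Ta) s.
Proof.
elim: i => [//|i IH] Hi; rewrite !iterS IH; last by lia.
by apply: tauP_agree; rewrite Hpre.
Qed.

Lemma paN z : pa z < N. Proof. exact: (posN_lt Hrib Ha). Qed.
Lemma pbN z : pb z < N. Proof. exact: (posN_lt Hrib Hb). Qed.

Lemma L2 z : pa z < k -> (z.1 \in Ta) = (z.1 \in Tb).
Proof. by move=> H; rewrite -(iter_pos singa s z); apply: Hpre. Qed.

Lemma L3 z : pa z <= k -> pb z = pa z.
Proof.
move=> H; rewrite -{1}(iter_pos singa s z) -L1 //.
by rewrite (posN_iter Hrib Hb) // paN.
Qed.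

Lemma L4 z : k < pa z -> k < pb z.
Proof.
move=> H; rewrite ltnNge; apply/negP => H'.
have := L1 H'; rewrite (iter_pos singb s z) => Hz.
have : pa z = pb z by rewrite {1}Hz (posN_iter Hrib Ha) // pbN.
lia.
Qed.

Lemma pad : pa d = k.
Proof. exact: (posN_iter Hrib Ha). Qed.

Lemma L5 : k < pa (alpha d).
Proof.
have := pos_alpha_neq Hrib Ha s d; rewrite pad => Hne.
rewrite ltn_neqAle Hne /= leqNgt; apply/negP => Hl.
have := L2 Hl; rewrite /= (negbTE Hfb) Hfa //.
Qed.

Local Notation W := (Wset ends Ta d).
Local Notation J := (pa (alpha d)).

Lemma L6 z : (tl z \in W) = (k < pa z <= J).
Proof.
rewrite (W_arc Hrib Ha z Hfa).
have Hk' : k <= N by lia.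
rewrite /d !(posN_shift Hrib Ha s z Hk') (posN_shift Hrib Ha s (alpha d) Hk').
have H1 := paN z; have H2 := paN (alpha d); have H3 := L5.
rewrite -/d.
by case: (leqP k (pa z)) => h1; case: (leqP k (pa (alpha d))) => h2; apply/idP/idP; lia.
Qed.

Lemma touch_dart (S : {set V}) (z : D) :
  touch S z.1 = (tl z \in S) || (tl (alpha z) \in S).
Proof. by case: z => g [] //; rewrite /P3.touch /tail /= orbC. Qed.

Lemma inside_dart (S : {set V}) (z : D) :
  inside S z.1 = (tl z \in S) && (tl (alpha z) \in S).
Proof. by case: z => g [] //; rewrite /P3.inside /tail /= andbC. Qed.

Lemma L7 : tl d \notin W.
Proof. by rewrite L6 pad ltnn. Qed.

Lemma Wad : tl (alpha d) \in W.
Proof. by rewrite L6 L5 leqnn. Qed.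

Lemma L8 g : touch W g -> ~~ inside W g -> g != d.1 -> g \notin Ta.
Proof.
move=> Ht Hi Hgf; apply/negP => gT.
have E1 := W_same ends Hfa gT Hgf.
by move: Ht Hi; rewrite /P3.touch /P3.inside E1 orbb andbb => ->.
Qed.

Lemma crossA z : tl z \in W -> tl (alpha z) \notin W -> z.1 != d.1 ->
  (pa (alpha z) < k) || (etaS Ta s z.1 \in W).
Proof.
move=> H1 H2 Hz; move: (H1) (H2); rewrite (L6 z) (L6 (alpha z)) => /andP [A1 A2] A3.
have Hne : pa (alpha z) != k.
  apply/negP => /eqP Hp.
  have : pa (alpha z) = pa d by rewrite Hp pad.
  by move/(pos_inj singa) => Hzd; move: Hz; rewrite -Hzd eqxx.
case: (ltnP (pa (alpha z)) k) => Hl; first by [].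
apply/orP; right.
have Hlt : pa z < pa (alpha z) by move: A3 Hne; rewrite negb_and -leqNgt -ltnNge; lia.
by rewrite (eta_first Hrib Ha Hlt).
Qed.

Lemma crossB z : tl z \in W -> tl (alpha z) \notin W -> z.1 != d.1 -> pa (alpha z) < k ->
  (z.1 \notin Tb) && (etaS Tb s z.1 \notin W).
Proof.
move=> H1 H2 Hz Hl.
have Hta : z.1 \notin Ta.
  apply: L8 => //; first by rewrite touch_dart H1.
  by rewrite inside_dart (negbTE H2) andbF.
have -> : z.1 \notin Tb by rewrite -(L2 Hl).
have A1 : k < pa z by move: H1; rewrite L6 => /andP [].
have B1 := L4 A1; have B2 := L3 (ltnW Hl).
have Hlt : pb (alpha z) < pb (alpha (alpha z)) by rewrite alphaK B2; lia.
have -> : z.1 = (alpha z).1 by [].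
by rewrite (eta_first Hrib Hb Hlt).
Qed.

Lemma L9 : etaS Tb s d.1 = tl d.
Proof.
apply: (eta_first Hrib Hb).
rewrite (L3 (_ : pa d <= k)) ?pad //; exact: (L4 L5).
Qed.

Definition Fg (g : E) : bool :=
  (g == d.1) || [&& touch W g, ~~ inside W g & (pa (g,true) < k) || (pa (g,false) < k)].

Lemma F_imp g : Fg g -> (g \notin Tb) && (etaS Tb s g \notin W).
Proof.
move=> HF; case: (eqVneq g d.1) => [-> | Hgf].
  by rewrite L9; apply/andP; split; [apply: Hfb | apply: L7].
move: HF; rewrite /Fg (negbTE Hgf) orFb => /and3P [Ht Hi Hp].
case: (boolP (tl (g,true) \in W)) => H1.
  have H2 : tl (alpha (g,true)) \notin W.
    by move: Hi; rewrite (inside_dart _ (g,true)) H1.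
  have Hl : pa (alpha (g,true)) < k.
    move: (H1); rewrite L6 => /andP [A1 _]; move: Hp => /orP [] //; lia.
  exact: (crossB H1 H2 Hgf Hl).
have H1' : tl (g,false) \in W.
  by move: Ht; rewrite (touch_dart _ (g,true)) (negbTE H1).
have Hl : pa (alpha (g,false)) < k.
  move: (H1'); rewrite L6 => /andP [A1 _]; move: Hp => /orP [] //; lia.
exact: (crossB (z := (g,false)) H1' H1 Hgf Hl).
Qed.

Lemma edgeA g : touch W g ->
  [|| (g \notin Ta) && (etaS Ta s g \in W), (g \in Ta) && inside W g | Fg g].
Proof.
move=> Ht; case: (boolP (inside W g)) => Hi.
  case: (boolP (g \in Ta)) => gT; first by rewrite orbT.
  by rewrite (eta_mem2 Hrib s Ha Hi).
case: (eqVneq g d.1) => [Hg | Hgf]; first by rewrite /Fg Hg eqxx !orbT.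
have gT := L8 Ht Hi Hgf.
have HF : (pa (g,true) < k) || (pa (g,false) < k) -> Fg g.
  by move=> H; rewrite /Fg Ht Hi H orbT.
case: (boolP (tl (g,true) \in W)) => H1.
  have H2 : tl (alpha (g,true)) \notin W.
    by move: Hi; rewrite (inside_dart _ (g,true)) H1.
  case/orP: (crossA H1 H2 Hgf) => [Hl | He]; first by rewrite HF ?orbT //; apply/orP; right.
  by rewrite gT He.
have H1' : tl (g,false) \in W.
  by move: Ht; rewrite (touch_dart _ (g,true)) (negbTE H1).
case/orP: (crossA (z := (g,false)) H1' H1 Hgf) => [Hl | He]; first by rewrite HF ?orbT //; apply/orP; left.
by rewrite gT He.
Qed.

Lemma boolA (a b c t : bool) : (t -> [|| a, b | c]) -> (t : nat) <= a + b + c.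
Proof. by case: a; case: b; case: c; case: t => //= /(_ isT). Qed.

Lemma boolB (b t f c : bool) : (b -> c) -> (f -> c) -> ~~ (b && t) -> ~~ (f && t) ->
  ~~ (b && f) -> b + (t && c) + f <= c.
Proof. by case: b; case: t; case: f; case: c => //= H1 H2; rewrite ?H1 ?H2. Qed.

Lemma edgeB g : ((g \notin Tb) && (etaS Tb s g \in W)) + ((g \in Tb) && touch W g) + Fg g
  <= touch W g.
Proof.
apply: boolB.
- by case/andP => _ /(eta_mem Hrib Hb).
- case/orP => [/eqP -> | /and3P [] //].
  by rewrite (touch_dart _ d) Wad orbT.
- by apply/negP => /andP [/andP [H _] H']; rewrite H' in H.
- by apply/negP => /andP [/F_imp /andP [H _] H']; rewrite H' in H.
- by apply/negP => /andP [/andP [_ H] /F_imp /andP [_ H']]; rewrite H in H'.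
Qed.

Lemma card_sumn (P : pred E) : #|[set g | P g]| = \sum_g P g.
Proof.
rewrite -sum1_card big_mkcond /=; apply: eq_bigr => g _; rewrite inE.
by case: (P g).
Qed.

Lemma inj_false : False.
Proof.
have SA : \sum_g touch W g <= \sum_g (((g \notin Ta) && (etaS Ta s g \in W))
                  + ((g \in Ta) && inside W g) + Fg g).
  by apply: leq_sum => g _; apply: boolA; apply: edgeA.
have SB : \sum_g (((g \notin Tb) && (etaS Tb s g \in W)) + ((g \in Tb) && touch W g) + Fg g)
          <= \sum_g touch W g.
  by apply: leq_sum => g _; apply: edgeB.
rewrite !big_split /= in SA SB.
have EqAB : \sum_g ((g \notin Ta) && (etaS Ta s g \in W)) =
            \sum_g ((g \notin Tb) && (etaS Tb s g \in W)).
  have H : (\sum_(x in W) beta Ta s x = \sum_(x in W) beta Tb s x)%R.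
    by apply: eq_bigr => x _; apply: Heq.
  rewrite !sum_beta in H.
  have H' : Posz (\sum_g ((g \notin Ta) && (etaS Ta s g \in W))) =
            Posz (\sum_g ((g \notin Tb) && (etaS Tb s g \in W))).
    by rewrite !(big_morph Posz PoszD (erefl (Posz 0))).
  by case: H'.
have C1 := card_sumn [pred g | (g \in Tb) && touch W g].
have C2 := card_sumn [pred g | (g \in Ta) && inside W g].
have T1 := TC1 (proj1 Hb) L7.
have T2 := TC2 Hrib s Ha Wad.
move: SA SB EqAB C1 C2 T1 T2.
set a1 := \sum_g touch W g.
set a2 := \sum_g ((g \notin Ta) && (etaS Ta s g \in W)).
set a3 := \sum_g ((g \in Ta) && inside W g).
set a4 := \sum_g Fg g.
set a5 := \sum_g ((g \notin Tb) && (etaS Tb s g \in W)).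
set a6 := \sum_g ((g \in Tb) && touch W g).
rewrite /=.
set n1 := #|[set g in Tb | touch W g]|.
set n2 := #|[set g in Ta | inside W g]|.
lia.
Qed.

End Inj.

End P10.
Import P10.

Module P11.

Section Final.
Variables (V E : finType) (ends : E -> V * V) (sigma : {perm dart E}).
Local Notation D := (dart E).
Local Notation N := #|{: dart E}|.
Hypothesis Hrib : ribbon ends sigma.
Hypothesis Hloop : loopless ends.
Local Notation beta := (beta ends sigma).

Lemma prefix_eq (Ta Tb : {set E}) (s : D) k :
  (forall i, i < k ->
    ((iter i (tauP sigma Ta) s).1 \in Ta) = ((iter i (tauP sigma Ta) s).1 \in Tb)) ->
  forall i, i <= k -> iter i (tauP sigma Tb) s = iter i (tauP sigma Ta) s.
Proof.
move=> Hpre; elim=> [//|i IH] Hi; rewrite !iterS IH; last by lia.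
by apply: tauP_agree; rewrite Hpre.
Qed.

Lemma bern_inj (T T' : {set E}) (s : D) : spanning_tree ends T -> spanning_tree ends T' ->
  (forall u, beta T s u = beta T' s u) -> T = T'.
Proof.
move=> HT HT' Heq.
pose P k := (k < N) && (((iter k (tauP sigma T) s).1 \in T) !=
                        ((iter k (tauP sigma T) s).1 \in T')).
case: (boolP [exists i : 'I_N, P i]) => [/existsP [i Hi] | Hn].
  have ex : exists k, P k by exists i.
  case: (ex_minnP ex) => k /andP [Hk Hdiff] Hmin.
  have Hpre : forall j, j < k ->
      ((iter j (tauP sigma T) s).1 \in T) = ((iter j (tauP sigma T) s).1 \in T').
    move=> j Hj; apply/eqP/negPn/negP => Hd.
    have : k <= j by apply: Hmin; rewrite /P Hd andbT; lia.
    lia.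
  exfalso.
  case: (boolP ((iter k (tauP sigma T) s).1 \in T)) => HinT.
    have HnT' : (iter k (tauP sigma T) s).1 \notin T' by move: Hdiff; rewrite HinT; case: (_ \in _).
    exact: (inj_false Hrib HT HT' Hk Hpre HinT HnT' Heq).
  have HinT' : (iter k (tauP sigma T) s).1 \in T' by move: Hdiff; rewrite (negbTE HinT); case: (_ \in _).
  have L := prefix_eq Hpre.
  have Hpre' : forall j, j < k ->
      ((iter j (tauP sigma T') s).1 \in T') = ((iter j (tauP sigma T') s).1 \in T).
    by move=> j Hj; rewrite L ?(ltnW Hj) // Hpre.
  have Hfa : (iter k (tauP sigma T') s).1 \in T' by rewrite L.
  have Hfb : (iter k (tauP sigma T') s).1 \notin T by rewrite L.
  exact: (inj_false Hrib HT' HT Hk Hpre' Hfa Hfb (fun u => esym (Heq u))).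
apply/setP => g.
have Hl := posN_lt Hrib HT s (g,true).
move: Hn; rewrite negb_exists => /forallP /(_ (Ordinal Hl)).
rewrite /P /= Hl /= (iter_pos (tree_single Hrib s HT)) /=.
by move/negPn/eqP.
Qed.

Hypothesis Hplanar : planar V sigma.
Hypothesis Hconn : connected_graph ends.

Lemma main_thm (v v' : V) (e e' : E) (gamma : divisor V) (T T1 T2 : {set E}) :
    spanning_tree ends T -> spanning_tree ends T1 -> spanning_tree ends T2 ->
    beta_act ends sigma v e gamma T T1 ->
    beta_act ends sigma v' e' gamma T T2 ->
    T1 = T2.
Proof.
move=> HT H1 H2 [f1 Hf1] [f2 Hf2].
set s := start_dart ends v e in Hf1; set s' := start_dart ends v' e' in Hf2.
rewrite /add_div !bernardiE -/s -/s' in Hf1 Hf2.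
have [h Hh] := Rel_all Hrib Hloop Hplanar Hconn s s' H1 HT.
apply: (bern_inj (s := s') H1 H2).
apply: (break_uniq Hrib Hloop H1 H2).
exists (fun x => (f1 x - h x - f2 x)%R) => u.
rewrite !lap_sub -Hh -Hf1 -Hf2; ring.
Qed.

End Final.

End P11.
Import P11.

Theorem theorem5p1 (V E : finType) (ends : E -> V * V) (sigma : {perm dart E})
  (Hloop : loopless ends) (Hconn : connected_graph ends)
  (Hrib : ribbon ends sigma) (Hplanar : planar V sigma) :
  forall (v v' : V) (e e' : E), incident ends v e -> incident ends v' e' ->
  forall (gamma : divisor V), deg gamma = 0%R ->
  forall T T1 T2 : {set E},
    spanning_tree ends T -> spanning_tree ends T1 -> spanning_tree ends T2 ->
    beta_act ends sigma v e gamma T T1 ->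
    beta_act ends sigma v' e' gamma T T2 ->
    T1 = T2.
Proof.
move=> v v' e e' _ _ gamma _ T T1 T2 HT H1 H2 Ha1 Ha2.
exact: (main_thm Hrib Hloop Hplanar Hconn HT H1 H2 Ha1 Ha2).
Qed.
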